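(* Let $m\ge3$, $\theta\in(0,1]$, and let $\hat P$ be the expected normalized profile. Candidate $1$ wins under the Two-Round System in $\hat P$. If $\theta>\frac{m-3}{5m-3}$, the Two-Round System is not CM in $\hat P$ (and not CM in any continuous profile of some neighborhood of $\hat P$). If $\theta<\frac{m-3}{5m-3}$, it is CM in $\hat P$; more precisely, the profile $Q$ obtained from $\hat P$ by reassigning the total weight $\frac{1-\theta}{2}$ of rankings preferring $2$ to $1$ so that a fraction $\frac{2(1-2\theta)}{3(1-\theta)}$ of it goes to ranking $2\succ3\succ\cdots\succ m\succ1$ and a fraction $\frac{1+\theta}{3(1-\theta)}$ goes to ranking $3\succ4\succ\cdots\succ m\succ1\succ2$ has candidate $2$ as Two-Round winner.
   Context: A ranking is a strict total order on $\{1,\dots,m\}$. A continuous profile consists of the candidate set, total weight $w(P)>0$ and weights $w(p,P)\ge 0$ for each ranking $p$ summing to $w(P)$; profiles are identified with weight vectors in $\mathbb R^{m!}$. For a candidate set $K$, $P_K$ restricts each ranking to $K$ (aggregating weights). Plurality score $s_{\mathrm{Plu}}(c,P)$: total weight of rankings placing $c$ first. Two-Round System: the two candidates with highest Plurality scores in $P$ form $K$, and the winner is the one with higher Plurality score in $P_K$; ties broken by an arbitrary fixed rule. CM (continuous): a rule $f$ is CM in $P$ if there is a continuous profile $Q$ with the same candidates and total weight, $f(Q)\ne f(P)$, and every ranking $p$ with $w(p,Q)<w(p,P)$ prefers $f(Q)$ to $f(P)$. Expected normalized profile $\hat P$: total weight $1$, weight $\theta+\frac{1-\theta}{m!}$ on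 $1\succ\cdots\succ m$ and $\frac{1-\theta}{m!}$ on each other ranking. *)

(* Defs.v *)
From HB Require Import structures.
From mathcomp Require Import all_boot all_order all_algebra all_fingroup.
Set Implicit Arguments. Unset Strict Implicit. Unset Printing Implicit Defensive.
Import Order.TTheory GRing.Theory Num.Theory.
Local Open Scope ring_scope.

(* Candidates 1..m of the paper are the ordinals 0..m-1 of 'I_m
   (paper candidate k  <->  ordinal with value k-1).
   A ranking is a permutation s : {perm 'I_m}; s i is the candidate at
   position i (position 0 = top). *)
Definition ranking (m : nat) := {perm 'I_m}.

Definition prefers m (s : ranking m) (a b : 'I_m) : bool :=
  ((s^-1)%g a < (s^-1)%g b)%N.

Definition profile (R : realFieldType) m := ranking m -> R.

Definition total (R : realFieldType) m (P : profile R m) : R :=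
  \sum_(s : ranking m) P s.

Definition valid_profile (R : realFieldType) m (P : profile R m) : Prop :=
  (forall s, 0 <= P s) /\ 0 < total P.

Definition plu (R : realFieldType) m (P : profile R m) (c : 'I_m) : R :=
  \sum_(s : ranking m | ((s^-1)%g c == 0 :> nat)) P s.

Definition plu_restr (R : realFieldType) m (K : {set 'I_m}) (P : profile R m)
    (c : 'I_m) : R :=
  \sum_(s : ranking m | [forall d in K, (d != c) ==> prefers s c d]) P s.

Definition tiebreak m (tb : {set 'I_m} -> 'I_m) : Prop :=
  forall S : {set 'I_m}, S != set0 -> tb S \in S.

Definition trs_first (R : realFieldType) m (tb : {set 'I_m} -> 'I_m)
    (P : profile R m) : 'I_m :=
  tb [set c | [forall d, plu P d <= plu P c]].

Definition trs_second (R : realFieldType) m (tb : {set 'I_m} -> 'I_m)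
    (P : profile R m) : 'I_m :=
  let a := trs_first tb P in
  tb [set c | (c != a) && [forall d, (d != a) ==> (plu P d <= plu P c)]].

Definition trs (R : realFieldType) m (tb : {set 'I_m} -> 'I_m)
    (P : profile R m) : 'I_m :=
  let a := trs_first tb P in
  let b := trs_second tb P in
  let K := [set a; b] in
  if plu_restr K P b < plu_restr K P a then a
  else if plu_restr K P a < plu_restr K P b then b
  else tb K.

Definition CM_witness (R : realFieldType) m (f : profile R m -> 'I_m)
    (P Q : profile R m) : Prop :=
  valid_profile Q /\ total Q = total P /\ f Q != f P /\
  (forall s, Q s < P s -> prefers s (f Q) (f P)).

Definition is_CM (R : realFieldType) m (f : profile R m -> 'I_m)
    (P : profile R m) : Prop :=
  exists Q, CM_witness f P Q.

Definition Phat (R : realFieldType) m (theta : R) : profile R m :=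
  fun s => (if s == 1%g then theta else 0) + (1 - theta) / (m`!)%:R.

Definition rank_2_to_1 m (s : ranking m) : bool :=
  [forall i : 'I_m, val (s i) == ((val i).+1 %% m)%N].
Definition rank_3_to_2 m (s : ranking m) : bool :=
  [forall i : 'I_m, val (s i) == ((val i).+2 %% m)%N].

Definition is_cand m (k : nat) (c : 'I_m) : bool := val c == k.-1.

Definition Qmanip (R : realFieldType) m (theta : R) : profile R m :=
  fun s =>
    (if [exists c1, exists c2, [&& is_cand 1 c1, is_cand 2 c2 & prefers s c2 c1]]
     then 0 else Phat theta s)
    + (if rank_2_to_1 s then (1 - theta) / 2 * (2 * (1 - 2 * theta) / (3 * (1 - theta)))
       else 0)
    + (if rank_3_to_2 s then (1 - theta) / 2 * ((1 + theta) / (3 * (1 - theta)))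
       else 0).

(* Main.v *)
Require Import Defs.
From HB Require Import structures.
From mathcomp Require Import all_boot all_order all_algebra all_fingroup.
Import Order.TTheory GRing.Theory Num.Theory.
Local Open Scope ring_scope.

From mathcomp Require Import zify ring lra.
Set Implicit Arguments. Unset Strict Implicit. Unset Printing Implicit Defensive.

Definition fc m (s : ranking m) (c : 'I_m) : bool := ((s^-1)%g c == 0 :> nat).

Lemma invM_app m (s t : ranking m) x : ((s * t)^-1)%g x = (s^-1)%g ((t^-1)%g x).
Proof. by rewrite invMg permM. Qed.

Lemma card_relabel m (t : ranking m) (F : pred (ranking m)) :
  #|[pred s | F (s * t)%g]| = #|F|.
Proof.
rewrite -!sum1_card [in RHS](reindex_inj (mulIg t)) /=.
by apply: eq_bigl => s; rewrite inE.
Qed.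

Lemma prefers_relabel m (s : ranking m) x y a b :
  prefers (s * tperm x y)%g a b = prefers s (tperm x y a) (tperm x y b).
Proof. by rewrite /prefers !invM_app tpermV. Qed.

Lemma fc_relabel m (s : ranking m) x y a :
  fc (s * tperm x y)%g a = fc s (tperm x y a).
Proof. by rewrite /fc !invM_app tpermV. Qed.

Lemma prefers_asym m (s : ranking m) x y : prefers s x y -> ~~ prefers s y x.
Proof. rewrite /prefers => h; rewrite -leqNgt ltnW //. Qed.

Lemma prefers_tot m (s : ranking m) x y : x != y -> prefers s y x = ~~ prefers s x y.
Proof.
move=> nxy; rewrite /prefers -leqNgt [in RHS]leq_eqVlt; case: eqP => //= h.
have hxy : x = y.
  by apply: (@perm_inj _ (s^-1)%g); apply: val_inj; rewrite /= h.
by move: nxy; rewrite hxy eqxx.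
Qed.

Lemma fc_uniq m (s : ranking m) x y : fc s x -> fc s y -> x = y.
Proof.
rewrite /fc => /eqP hx /eqP hy; apply: (@perm_inj _ (s^-1)%g); apply: val_inj.
by rewrite /= hx hy.
Qed.

Lemma fc_prefers m (s : ranking m) x y : x != y -> fc s x -> prefers s x y.
Proof.
move=> nxy hx; rewrite /prefers (eqP hx) lt0n; apply/negP => hy.
by move: nxy; rewrite (fc_uniq hx hy) eqxx.
Qed.

Lemma card_fc_eq m (c d : 'I_m) : #|[pred s | fc s c]| = #|[pred s | fc s d]|.
Proof.
rewrite -(card_relabel (tperm c d)); apply: eq_card => s.
by rewrite !inE /= fc_relabel tpermL.
Qed.

Lemma card_fc_sum m (c : 'I_m) : (m * #|[pred s | fc s c]|)%N = m`!.
Proof.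
case: m c => [|n] c; first by case: c.
have -> : (n.+1 * #|[pred s | fc s c]|)%N = \sum_(d : 'I_n.+1) #|[pred s | fc s d]|.
  by rewrite (eq_bigr (fun _ => #|[pred s | fc s c]|)) ?sum_nat_const ?card_ord // => d _; apply: card_fc_eq.
rewrite -card_Sn -sum1_card.
transitivity (\sum_(d : 'I_n.+1) \sum_(s : ranking n.+1) (fc s d : nat)).
  apply: eq_bigr => d _; rewrite -sum1_card big_mkcond /=.
  by apply: eq_bigr => s _; rewrite inE; case: (fc s d).
rewrite exchange_big /=; apply: eq_bigr => s _.
rewrite (bigD1 (s ord0)) //= big1 => [|d hd].
  by rewrite /fc permK.
case h: (fc s d) => //; move: hd; rewrite (@fc_uniq _ s d (s ord0)) ?eqxx //.
by rewrite /fc permK.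
Qed.

Lemma card_split (T : finType) (F G : pred T) :
  #|F| = (#|[pred s | F s && G s]| + #|[pred s | F s && ~~ G s]|)%N.
Proof.
rewrite -!sum1_card (bigID G) /=; congr (_ + _)%N; apply: eq_bigl => s; by rewrite !inE.
Qed.

Lemma prefers_trans m (s : ranking m) x y z :
  prefers s x y -> prefers s y z -> prefers s x z.
Proof. exact: ltn_trans. Qed.

Lemma card_pref m (x y : 'I_m) : x != y -> (2 * #|[pred s | prefers s x y]|)%N = m`!.
Proof.
move=> nxy.
have e : #|[pred s | prefers s y x]| = #|[pred s | prefers s x y]|.
  rewrite -(card_relabel (tperm x y)); apply: eq_card => s.
  by rewrite !inE /= prefers_relabel tpermL tpermR.
rewrite mul2n -addnn -card_Sn [in RHS](card_split _ (fun s => prefers s x y)); congr (_ + _)%N.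
rewrite -e; apply: eq_card => s; by rewrite !inE /= (prefers_tot _ nxy).
Qed.

Lemma card_pref_fc m (x y c : 'I_m) : x != y -> c != x -> c != y ->
  (2 * #|[pred s | prefers s x y && fc s c]|)%N = #|[pred s | fc s c]|.
Proof.
move=> nxy ncx ncy.
have e : #|[pred s | prefers s y x && fc s c]| = #|[pred s | prefers s x y && fc s c]|.
  rewrite -(card_relabel (tperm x y)); apply: eq_card => s.
  by rewrite !inE /= prefers_relabel fc_relabel tpermL tpermR tpermD // eq_sym.
rewrite mul2n -addnn [in RHS](card_split _ (fun s => prefers s x y)); congr (_ + _)%N.
  by apply: eq_card => s; rewrite !inE andbC.
rewrite -e; apply: eq_card => s; by rewrite !inE /= (prefers_tot _ nxy) andbC.
Qed.

Definition last3 m (s : ranking m) (x y z : 'I_m) := prefers s y x && prefers s z x.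

Lemma last3_relabel m (s : ranking m) x y z : x != y -> z != x -> z != y ->
  last3 (s * tperm x y)%g x y z = last3 s y x z.
Proof.
by move=> nxy nzx nzy; rewrite /last3 !prefers_relabel tpermL tpermR tpermD // eq_sym.
Qed.

Lemma last3_part m (s : ranking m) x y z : x != y -> x != z -> y != z ->
  (~~ last3 s x y z && last3 s y x z = last3 s y x z) /\
  (~~ last3 s x y z && ~~ last3 s y x z = last3 s z y x).
Proof.
move=> nxy nxz nyz.
have d1 : (s^-1)%g x != (s^-1)%g y :> nat by rewrite (inj_eq val_inj) (inj_eq perm_inj).
have d2 : (s^-1)%g x != (s^-1)%g z :> nat by rewrite (inj_eq val_inj) (inj_eq perm_inj).
have d3 : (s^-1)%g y != (s^-1)%g z :> nat by rewrite (inj_eq val_inj) (inj_eq perm_inj).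
rewrite /last3 /prefers; move: d1 d2 d3.
case: ltngtP => h1; case: ltngtP => h2; case: ltngtP => h3 //= _ _ _; split=> //; lia.
Qed.

Lemma card_last3 m (x y z : 'I_m) : x != y -> x != z -> y != z ->
  (3 * #|[pred s | last3 s x y z]|)%N = m`!.
Proof.
move=> nxy nxz nyz.
have e1 : #|[pred s | last3 s y x z]| = #|[pred s | last3 s x y z]|.
  rewrite -(card_relabel (tperm x y)); apply: eq_card => s.
  by rewrite !inE /= /last3 !prefers_relabel tpermL tpermR tpermD // eq_sym.
have e2 : #|[pred s | last3 s z y x]| = #|[pred s | last3 s x y z]|.
  rewrite -(card_relabel (tperm x z)); apply: eq_card => s.
  rewrite !inE /= /last3 !prefers_relabel tpermL tpermR tpermD 1?eq_sym //.
  by rewrite eq_sym.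
have c1 : m`! = (#|[pred s | last3 s x y z]| + #|[pred s | ~~ last3 s x y z]|)%N.
  rewrite -card_Sn (card_split _ (fun s => last3 s x y z)).
  by congr (_ + _)%N; apply: eq_card.
have c2 : #|[pred s | ~~ last3 s x y z]| =
   (#|[pred s | last3 s y x z]| + #|[pred s | last3 s z y x]|)%N.
  rewrite (card_split _ (fun s => last3 s y x z)).
  by congr (_ + _)%N; apply: eq_card => s; rewrite !inE /= ?(proj1 (last3_part s nxy nxz nyz)) ?(proj2 (last3_part s nxy nxz nyz)).
rewrite c1 c2 e1 e2; lia.
Qed.


Lemma first_max (R : realFieldType) m tb (P : profile R m) : (0 < m)%N -> tiebreak tb ->
  forall d, plu P d <= plu P (trs_first tb P).
Proof.
move=> hm htb.
set S := [set c | [forall d, plu P d <= plu P c]].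
have : S != set0.
  apply/set0Pn; exists [arg max_(i > Ordinal hm) plu P i]%O; rewrite inE.
  case: (@real_arg_maxP R _ (Ordinal hm) predT (plu P)) => //.
    by move=> i _; apply: num_real.
  move=> i _ h; apply/forallP => d; exact: h.
by move/htb; rewrite /trs_first -/S inE => /forallP.
Qed.

Lemma first_eq (R : realFieldType) m tb (P : profile R m) a : tiebreak tb ->
  (forall d, d != a -> plu P d < plu P a) -> trs_first tb P = a.
Proof.
move=> htb h; rewrite /trs_first.
have -> : [set c | [forall d, plu P d <= plu P c]] = [set a].
  apply/setP => c; rewrite !inE; apply/forallP/eqP => [hc|->].
    apply/eqP; apply/negP => /negP nca; have := h c nca; have := hc a.
    by rewrite leNgt => /negP.
  by move=> d; case: (eqVneq d a) => [->//|/h/ltW].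
have : [set a] != set0 by apply/set0Pn; exists a; rewrite inE.
by move/htb; rewrite inE => /eqP.
Qed.

Lemma second_prop (R : realFieldType) m tb (P : profile R m) : (1 < m)%N -> tiebreak tb ->
  trs_second tb P != trs_first tb P /\
  forall d, d != trs_first tb P -> plu P d <= plu P (trs_second tb P).
Proof.
move=> hm htb.
set a := trs_first tb P.
set S := [set c | (c != a) && [forall d, (d != a) ==> (plu P d <= plu P c)]].
have : S != set0.
  have hm0 : (0 < m)%N by lia.
  pose i1 : 'I_m := if a == Ordinal hm0 then Ordinal hm else Ordinal hm0.
  have hi1 : i1 != a.
    rewrite /i1; case: (eqVneq a (Ordinal hm0)) => [ha|ha]; last by rewrite eq_sym.
    by rewrite ha; apply/eqP => /(congr1 val).
  apply/set0Pn; exists [arg max_(i > i1 | i != a) plu P i]%O; rewrite inE.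
  case: (@real_arg_maxP R _ i1 (fun i => i != a) (plu P)) => //.
    by move=> i _; apply: num_real.
  move=> i -> h /=; apply/forallP => d; apply/implyP; exact: h.
by move/htb; rewrite /trs_second -/a -/S inE => /andP[-> /forallP h]; split=> // d /(implyP (h d)).
Qed.

Lemma second_eq (R : realFieldType) m tb (P : profile R m) a b : tiebreak tb ->
  trs_first tb P = a -> b != a ->
  (forall d, d != a -> d != b -> plu P d < plu P b) -> trs_second tb P = b.
Proof.
move=> htb ha nba h; rewrite /trs_second ha.
have -> : [set c | (c != a) && [forall d, (d != a) ==> (plu P d <= plu P c)]] = [set b].
  apply/setP => c; rewrite !inE; apply/andP/eqP => [[nca /forallP hc]|->].
    apply/eqP; apply/negP => /negP ncb; have := h c nca ncb; have := implyP (hc b) nba.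
    by rewrite leNgt => /negP.
  split=> //; apply/forallP => d; apply/implyP => nda.
  by case: (eqVneq d b) => [->//|/(h _ nda)/ltW].
have : [set b] != set0 by apply/set0Pn; exists b; rewrite inE.
by move/htb; rewrite inE => /eqP.
Qed.

Lemma restr2 (R : realFieldType) m (P : profile R m) x y : x != y ->
  plu_restr [set x; y] P x = \sum_(s | prefers s x y) P s.
Proof.
move=> nxy; apply: eq_bigl => s; apply/forallP/idP => [h|h d].
  by have := h y; rewrite !inE eqxx orbT eq_sym nxy.
rewrite !inE; apply/implyP => /orP[/eqP->|/eqP->]; first by rewrite eqxx.
by rewrite eq_sym nxy.
Qed.

Lemma trs_res (R : realFieldType) m tb (P : profile R m) a b :
  trs_first tb P = a -> trs_second tb P = b -> a != b ->
  (\sum_(s | prefers s b a) P s < \sum_(s | prefers s a b) P s -> trs tb P = a) /\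
  (\sum_(s | prefers s a b) P s < \sum_(s | prefers s b a) P s -> trs tb P = b).
Proof.
move=> ha hb nab; rewrite /trs ha hb restr2 // setUC restr2 1?eq_sym //.
split=> h; first by rewrite h.
by rewrite ltNge (ltW h) /= h.
Qed.

Lemma trs_cases (R : realFieldType) m tb (P : profile R m) : tiebreak tb ->
  trs tb P = trs_first tb P \/ trs tb P = trs_second tb P.
Proof.
move=> htb; rewrite /trs.
case: ifP => _; first by left.
case: ifP => _; first by right.
have : [set trs_first tb P; trs_second tb P] != set0.
  by apply/set0Pn; exists (trs_first tb P); rewrite !inE eqxx.
by move/htb; rewrite !inE => /orP[/eqP->|/eqP->]; [left|right].
Qed.


Lemma sum_part (R : realFieldType) m (f : profile R m) x y : x != y ->
  \sum_s f s = \sum_(s | prefers s x y) f s + \sum_(s | prefers s y x) f s.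
Proof.
move=> nxy; rewrite (bigID (fun s => prefers s x y)) /=; congr (_ + _).
by apply: eq_bigl => s; rewrite (prefers_tot _ nxy).
Qed.

Lemma not_CM (R : realFieldType) m tb (P : profile R m) (A0 : 'I_m) :
  (1 < m)%N -> tiebreak tb -> trs tb P = A0 ->
  (forall w, w != A0 -> \sum_(s | prefers s w A0) P s < \sum_(s | prefers s A0 w) P s) ->
  (forall w c, w != A0 -> c != A0 -> c != w ->
     \sum_(s | prefers s w A0) P s + \sum_(s | prefers s A0 w && fc s c) P s < 2 * plu P A0) ->
  ~ is_CM (trs tb) P.
Proof.
move=> hm htb hP H2 H3 [Q [[Qge0 Qpos] [Htot [Hne Hm]]]].
rewrite hP in Hne Hm; move: Hne Hm; set w := trs tb Q => Hne Hm.
have HL : forall s, prefers s A0 w -> P s <= Q s.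
  move=> s h; rewrite leNgt; apply/negP => /Hm h2.
  by move: (prefers_asym h); rewrite h2.
have hm0 : (0 < m)%N by lia.
have maxa := first_max Q hm0 htb.
have [nba maxb] := second_prop Q hm htb.
move: nba maxb maxa; set a := trs_first tb Q; set b := trs_second tb Q => nba maxb maxa.
have Hc := trs_cases Q htb; rewrite -/w -/a -/b in Hc.
case: (boolP (A0 \in [set a; b])) => hin.
  have S1 : \sum_(s | prefers s A0 w) P s <= \sum_(s | prefers s A0 w) Q s.
    by apply: ler_sum => s; apply: HL.
  have S2 : \sum_(s | prefers s w A0) Q s <= \sum_(s | prefers s w A0) P s.
    move: Htot; rewrite /Defs.total (sum_part P Hne) (sum_part Q Hne) => Ht; lra.
  have S3 := H2 _ Hne.
  have SQ : \sum_(s | prefers s w A0) Q s < \sum_(s | prefers s A0 w) Q s by lra.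
  have nab : a != b by rewrite eq_sym.
  have [ha hb] := trs_res (P:=Q) (erefl a) (erefl b) nab.
  move: hin; rewrite !inE => /orP[/eqP eA|/eqP eB].
    case: Hc => hw; first by move: Hne; rewrite hw eA eqxx.
    have := ha; rewrite -hw -eA => /(_ SQ) e; by move: Hne; rewrite /w e eqxx.
  case: Hc => hw; last by move: Hne; rewrite hw eB eqxx.
  have := hb; rewrite -hw -eB => /(_ SQ) e; by move: Hne; rewrite /w e eqxx.
move: hin; rewrite !inE negb_or => /andP[nA0a nA0b].
have claim : forall c, c != A0 -> c != w -> plu Q A0 <= plu Q w -> plu Q A0 <= plu Q c -> False.
  move=> c nc0 ncw h1 h2.
  have key : plu Q w + plu Q c + Defs.total P <=
     \sum_(s | prefers s w A0) P s + \sum_(s | prefers s A0 w && fc s c) P s + Defs.total Q.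
    change (plu Q w) with (\sum_(s | fc s w) Q s).
    change (plu Q c) with (\sum_(s | fc s c) Q s).
    rewrite /Defs.total (big_mkcond (fun s => fc s w)) (big_mkcond (fun s => fc s c)).
    rewrite (big_mkcond (fun s => prefers s w A0)) (big_mkcond (fun s => prefers s A0 w && fc s c)).
    rewrite -!big_split /=; apply: ler_sum => s _.
    have Q0 := Qge0 s.
    case hU: (prefers s w A0).
      have hL : prefers s A0 w = false by rewrite (prefers_tot _ Hne) hU.
      rewrite hL /=.
      case hw: (fc s w); case hc: (fc s c) => /=; rewrite /fc in hw hc; rewrite ?hw ?hc; try lra.
      by move: ncw; rewrite (fc_uniq hc hw) eqxx.
    have hL : prefers s A0 w by rewrite (prefers_tot _ Hne) hU.
    have PQ := HL s hL.
    have hw : fc s w = false.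
      by apply/negP => /(fc_prefers Hne); rewrite hU.
    rewrite hw hL /=.
    by case: ifP => _; lra.
  have h0 : plu P A0 <= plu Q A0.
    apply: ler_sum => s hs; apply: HL; apply: fc_prefers => //; by rewrite eq_sym.
  have := H3 w c Hne nc0 ncw; lra.
case: Hc => hw.
  apply: (claim b); first by rewrite eq_sym.
  - by rewrite hw.
  - by rewrite hw; apply: maxa.
  - by apply: maxb.
apply: (claim a); first by rewrite eq_sym.
- by rewrite hw eq_sym.
- by rewrite hw; apply: maxb.
- by apply: maxa.
Qed.


Lemma sum_Phat (R : realFieldType) m (t : R) (S : pred (ranking m)) :
  \sum_(s | S s) Phat t s = (if S 1%g then t else 0) + #|S|%:R * ((1 - t) / (m`!)%:R).
Proof.
rewrite big_split /=; congr (_ + _).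
  rewrite -big_mkcondr; case: (boolP (S 1%g)) => h.
    by rewrite (big_pred1 1%g) // => s /=; case: (eqVneq s 1%g) => [->|_]; rewrite ?andbT ?andbF ?eqxx.
  by rewrite big_pred0 // => s /=; case: (eqVneq s 1%g) => [->|_]; rewrite ?andbT ?andbF // (negbTE h).
rewrite mulr_natl -sumr_const; by apply: eq_bigl => s.
Qed.

Lemma cntR (R : realFieldType) m (t : R) k n : (k * n)%N = m`! -> (0 < k)%N ->
  n%:R * ((1 - t) / (m`!)%:R) = (1 - t) / k%:R.
Proof.
move=> h hk.
have hn : (0 < n)%N by move: (fact_gt0 m); rewrite -h muln_gt0 => /andP[].
rewrite -h natrM; field; apply/andP; split; rewrite pnatr_eq0 -lt0n //.
Qed.

Lemma Phat_ge0 (R : realFieldType) m (t : R) (s : ranking m) : 0 <= t -> t <= 1 -> 0 <= Phat t s.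
Proof.
move=> h0 h1; rewrite /Phat; apply: addr_ge0; first by case: ifP.
apply: divr_ge0; first by lra.
by rewrite ler0n.
Qed.

Lemma total_Phat (R : realFieldType) m (t : R) : Defs.total (Phat t : profile R m) = 1.
Proof.
rewrite /Defs.total; have := @sum_Phat R m t predT; rewrite /= => ->.
have -> : #|@predT (ranking m)| = m`! by rewrite -card_Sn; apply: eq_card.
have hF : (m`!)%:R != 0 :> R by rewrite pnatr_eq0 -lt0n fact_gt0.
by field.
Qed.

Lemma pert (R : realFieldType) m (t : R) (P : profile R m) (eps : R) (S : pred (ranking m)) :
  0 < eps -> (forall s, `|P s - Phat t s| < eps) ->
  \sum_(s | S s) Phat t s - (m`!)%:R * eps <= \sum_(s | S s) P s /\
  \sum_(s | S s) P s <= \sum_(s | S s) Phat t s + (m`!)%:R * eps.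
Proof.
move=> he hP.
have hc : \sum_(s | S s) eps <= (m`!)%:R * eps.
  have -> : (m`!)%:R * eps = \sum_(s : ranking m) eps.
    by rewrite sumr_const card_Sn mulr_natl.
  rewrite big_mkcond /=; apply: ler_sum => s _; case: ifP => _; lra.
have h1 : \sum_(s | S s) P s <= \sum_(s | S s) (Phat t s + eps).
  apply: ler_sum => s _; have := hP s; rewrite ltr_norml; lra.
have h2 : \sum_(s | S s) (Phat t s - eps) <= \sum_(s | S s) P s.
  apply: ler_sum => s _; have := hP s; rewrite ltr_norml; lra.
rewrite big_split /= in h1; rewrite big_split /= sumrN in h2; split; lra.
Qed.

Lemma win_A0 (R : realFieldType) m tb (P : profile R m) (A0 : 'I_m) :
  (1 < m)%N -> tiebreak tb ->
  (forall d, d != A0 -> plu P d < plu P A0) ->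
  (forall w, w != A0 -> \sum_(s | prefers s w A0) P s < \sum_(s | prefers s A0 w) P s) ->
  trs tb P = A0.
Proof.
move=> hm htb H1 H2.
have ha := first_eq htb H1.
have [nba _] := second_prop P hm htb.
rewrite ha in nba.
have nab : A0 != trs_second tb P by rewrite eq_sym.
have [h _] := trs_res ha (erefl _) nab.
exact: h (H2 _ nba).
Qed.


Lemma fc1 m (c A0 : 'I_m) : val A0 = 0%N -> fc 1%g c = (c == A0).
Proof.
move=> hA; rewrite /fc invg1 perm1; apply/eqP/eqP => [h|->//].
by apply: val_inj; rewrite /= h hA.
Qed.

Lemma pref1 m (x y : 'I_m) : prefers 1%g x y = (val x < val y)%N.
Proof. by rewrite /prefers invg1 !perm1. Qed.

Lemma ne0 m (w A0 : 'I_m) : val A0 = 0%N -> w != A0 -> (0 < val w)%N.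
Proof.
move=> hA nw; rewrite lt0n; apply/negP => /eqP h; move: nw.
by rewrite (_ : w = A0) ?eqxx //; apply: val_inj; rewrite /= h hA.
Qed.

Lemma plu_Phat (R : realFieldType) m (t : R) (c A0 : 'I_m) : val A0 = 0%N ->
  plu (Phat t) c = (if c == A0 then t else 0) + (1 - t) / m%:R.
Proof.
move=> hA; have hm : (0 < m)%N by case: A0 hA => i /= hi _; lia.
change (plu (Phat t) c) with (\sum_(s | fc s c) Phat t s).
rewrite sum_Phat (fc1 _ hA); congr (_ + _).
rewrite (_ : #|_| = #|[pred s | fc s c]|); last by apply: eq_card.
exact: cntR (card_fc_sum c) hm.
Qed.

Lemma UPhat (R : realFieldType) m (t : R) (w A0 : 'I_m) : val A0 = 0%N -> w != A0 ->
  \sum_(s | prefers s w A0) Phat t s = (1 - t) / 2.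
Proof.
move=> hA nw.
rewrite sum_Phat pref1 hA ltn0 add0r.
rewrite (_ : #|_| = #|[pred s | prefers s w A0]|); last by apply: eq_card.
exact: cntR (card_pref nw) _.
Qed.

Lemma LPhat (R : realFieldType) m (t : R) (w A0 : 'I_m) : val A0 = 0%N -> w != A0 ->
  \sum_(s | prefers s A0 w) Phat t s = t + (1 - t) / 2.
Proof.
move=> hA nw.
rewrite sum_Phat pref1 hA (ne0 hA nw).
rewrite (_ : #|_| = #|[pred s | prefers s A0 w]|); last by apply: eq_card.
congr (_ + _); apply: cntR (card_pref _) _ => //; by rewrite eq_sym.
Qed.

Lemma LcPhat (R : realFieldType) m (t : R) (w c A0 : 'I_m) : val A0 = 0%N -> w != A0 ->
  c != A0 -> c != w ->
  \sum_(s | prefers s A0 w && fc s c) Phat t s = (1 - t) / (2 * m)%:R.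
Proof.
move=> hA nw nc ncw; have hm : (0 < m)%N by case: A0 hA nw {nc ncw} => i /= hi _; lia.
rewrite sum_Phat (fc1 _ hA) (negbTE nc) andbF add0r.
rewrite (_ : #|_| = #|[pred s | prefers s A0 w && fc s c]|); last by apply: eq_card.
apply: cntR; last by rewrite muln_gt0 hm.
rewrite mulnAC card_pref_fc; first by rewrite mulnC card_fc_sum.
- by rewrite eq_sym.
- by [].
- by [].
Qed.

Lemma part1 (R : realFieldType) m (t : R) tb (A0 : 'I_m) : val A0 = 0%N ->
  (3 <= m)%N -> 0 < t -> t <= 1 -> tiebreak tb -> trs tb (Phat t) = A0.
Proof.
move=> hA hm t0 t1 htb; apply: win_A0 => //; first by lia.
  by move=> d nd; rewrite !(plu_Phat _ _ hA) eqxx (negbTE nd); lra.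
by move=> w nw; rewrite (UPhat _ hA nw) (LPhat _ hA nw); lra.
Qed.

Lemma part2 (R : realFieldType) m (t : R) tb (A0 : 'I_m) : val A0 = 0%N ->
  (3 <= m)%N -> 0 < t -> t <= 1 -> tiebreak tb ->
  (m%:R - 3) / (5 * m%:R - 3) < t ->
  exists eps : R, 0 < eps /\
    forall P : profile R m, valid_profile P ->
      (forall s, `|P s - Phat t s| < eps) -> ~ is_CM (trs tb) P.
Proof.
move=> hA hm t0 t1 htb hth.
have hm1 : (1 < m)%N by apply: ltn_trans hm.
have hx : 3 <= m%:R :> R by rewrite (ler_nat R 3 m).
have hx0 : 0 < m%:R :> R by lra.
have hxn : m%:R != 0 :> R by rewrite pnatr_eq0 -lt0n; apply: ltn_trans hm1.
have hFn : (m`!)%:R != 0 :> R by rewrite pnatr_eq0 -lt0n fact_gt0.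
rewrite ltr_pdivrMr in hth; last by lra.
pose g := 2 * (t + (1 - t) / m%:R) - ((1 - t) / 2 + (1 - t) / (2 * m)%:R).
have gpos : 0 < g.
  have -> : g = (t * (5 * m%:R - 3) - (m%:R - 3)) / (2 * m%:R).
    rewrite /g (GRing.natrM R 2 m); field; exact: hxn.
  apply: divr_gt0; lra.
pose d := Num.min t g.
have dpos : 0 < d by rewrite lt_min t0 gpos.
have [dt dg] : d <= t /\ d <= g by have := le_refl d; rewrite {2}/d le_min => /andP[].
have hF : 0 < (m`!)%:R :> R by rewrite ltr0n fact_gt0.
pose eps := d / (8 * (m`!)%:R).
have epos : 0 < eps by apply: divr_gt0; lra.
have hM : (m`!)%:R * eps = d / 8 by rewrite /eps; field; exact: hFn.
exists eps; split => // P _ hP.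
have hPA : plu (Phat t) A0 - d / 8 <= plu P A0.
  by rewrite -hM; exact: (proj1 (pert (fun s => fc s A0) epos hP)).
have hA0 := plu_Phat t A0 hA; rewrite eqxx in hA0.
apply: (not_CM (A0 := A0) hm1 htb).
- apply: (win_A0 hm1 htb).
    move=> c nc.
    have hPc : plu P c <= plu (Phat t) c + d / 8.
      by rewrite -hM; exact: (proj2 (pert (fun s => fc s c) epos hP)).
    have := plu_Phat t c hA; rewrite (negbTE nc); lra.
  move=> w nw.
  have h1 := pert (fun s => prefers s w A0) epos hP.
  have h2 := pert (fun s => prefers s A0 w) epos hP.
  rewrite /= hM (UPhat _ hA nw) in h1; rewrite /= hM (LPhat _ hA nw) in h2; lra.
- move=> w nw.
  have h1 := pert (fun s => prefers s w A0) epos hP.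
  have h2 := pert (fun s => prefers s A0 w) epos hP.
  rewrite /= hM (UPhat _ hA nw) in h1; rewrite /= hM (LPhat _ hA nw) in h2; lra.
- move=> w c nw nc ncw.
  have h1 := pert (fun s => prefers s w A0) epos hP.
  have h2 := pert (fun s => prefers s A0 w && fc s c) epos hP.
  rewrite /= hM (UPhat _ hA nw) in h1; rewrite /= hM (LcPhat _ hA nw nc ncw) in h2.
  rewrite /g in dg; lra.
Qed.


Lemma shift_ex m k : (0 < m)%N -> exists s : ranking m, forall i, val (s i) = ((val i + k) %% m)%N.
Proof.
move=> hm.
pose f := fun i : 'I_m => Ordinal (ltn_pmod (val i + k) hm).
have inj : injective f.
  move=> i j /(congr1 val) /= /eqP; rewrite eqn_modDr => /eqP.
  by rewrite !modn_small // => /val_inj.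
by exists (perm inj) => i; rewrite permE.
Qed.

Lemma sum_ind (R : realFieldType) m (S r : pred (ranking m)) s0 (a : R) :
  (forall s, r s = (s == s0)) ->
  \sum_(s | S s) (if r s then a else 0) = if S s0 then a else 0.
Proof.
move=> hr; rewrite -big_mkcondr; case: (boolP (S s0)) => h.
  rewrite (big_pred1 s0) // => s /=; rewrite hr.
  by case: (eqVneq s s0) => [->|_]; rewrite ?andbT ?andbF.
rewrite big_pred0 // => s; rewrite hr.
by case: (eqVneq s s0) => [->|_]; rewrite ?andbT ?andbF // (negbTE h).
Qed.

Lemma E_eq m (s : ranking m) (A0 B : 'I_m) : val A0 = 0%N -> val B = 1%N ->
  [exists c1, exists c2, [&& is_cand 1 c1, is_cand 2 c2 & prefers s c2 c1]] = prefers s B A0.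
Proof.
move=> hA hB; apply/existsP/idP => [[c1 /existsP[c2 /and3P[h1 h2 h3]]]|h].
  have -> : B = c2 by apply: val_inj; rewrite hB; move: h2; rewrite /is_cand => /eqP.
  have -> : A0 = c1 by apply: val_inj; rewrite hA; move: h1; rewrite /is_cand => /eqP.
  done.
exists A0; apply/existsP; exists B; rewrite /is_cand hA hB /=; exact: h.
Qed.

Lemma sumQ (R : realFieldType) m (t : R) (A0 B : 'I_m) (s21 s32 : ranking m)
  (S : pred (ranking m)) :
  val A0 = 0%N -> val B = 1%N ->
  (forall s, rank_2_to_1 s = (s == s21)) -> (forall s, rank_3_to_2 s = (s == s32)) ->
  \sum_(s | S s) Qmanip t s =
  \sum_(s | S s && prefers s A0 B) Phat t s
  + (if S s21 then (1 - t) / 2 * (2 * (1 - 2 * t) / (3 * (1 - t))) else 0)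
  + (if S s32 then (1 - t) / 2 * ((1 + t) / (3 * (1 - t))) else 0).
Proof.
move=> hA hB h21 h32.
have nAB : A0 != B by apply/eqP => /(congr1 val); rewrite hA hB.
rewrite (eq_bigr (fun s => (if prefers s A0 B then Phat t s else 0)
   + (if rank_2_to_1 s then (1 - t) / 2 * (2 * (1 - 2 * t) / (3 * (1 - t))) else 0)
   + (if rank_3_to_2 s then (1 - t) / 2 * ((1 + t) / (3 * (1 - t))) else 0))); last first.
  move=> s _; rewrite /Qmanip (E_eq _ hA hB) (prefers_tot _ nAB).
  by case: (prefers s A0 B).
rewrite big_split [in LHS]big_split -big_mkcondr (sum_ind _ _ h21) (sum_ind _ _ h32).
done.
Qed.

Lemma part3 (R : realFieldType) m (t : R) (tb : {set 'I_m} -> 'I_m) (A0 : 'I_m) : val A0 = 0%N ->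
  (3 <= m)%N -> 0 < t -> t <= 1 -> tiebreak tb ->
  t < (m%:R - 3) / (5 * m%:R - 3) ->
  CM_witness (trs tb) (Phat t) (Qmanip t) /\ is_cand 2 (trs tb (Qmanip t)).
Proof.
move=> /eqP hA' hm t0 t1 htb hth.
have hm1 : (1 < m)%N by apply: ltn_trans hm.
have hm0 : (0 < m)%N by apply: ltn_trans hm1.
pose B := Ordinal hm1; pose C := Ordinal hm.
have hB' : (val B == 1)%N by []. have hC' : (val C == 2)%N by [].
have [s21 hs21] := shift_ex 1 hm0; have [s32 hs32] := shift_ex 2 hm0.
have h21 : forall s, rank_2_to_1 s = (s == s21).
  move=> s; apply/forallP/eqP => [h|->].
    by apply/permP => i; apply: val_inj; rewrite (eqP (h i)) hs21 addn1.
  by move=> i; rewrite hs21 addn1.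
have h32 : forall s, rank_3_to_2 s = (s == s32).
  move=> s; apply/forallP/eqP => [h|->].
    by apply/permP => i; apply: val_inj; rewrite (eqP (h i)) hs32 addn2.
  by move=> i; rewrite hs32 addn2.
have fB : fc s21 B.
  have e21 : s21 A0 = B by apply: val_inj; rewrite hs21 (eqP hA') /= modn_small.
  by rewrite /fc -e21 permK (eqP hA').
have fC : fc s32 C.
  have e32 : s32 A0 = C by apply: val_inj; rewrite hs32 (eqP hA') /= modn_small.
  by rewrite /fc -e32 permK (eqP hA').
have nBA : B != A0 by apply/eqP => /(congr1 val); rewrite (eqP hA').
have nCA : C != A0 by apply/eqP => /(congr1 val); rewrite (eqP hA').
have nCB : C != B by apply/eqP => /(congr1 val).
have fne : forall (s : ranking m) (x y : 'I_m), fc s x -> y != x -> fc s y = false.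
  move=> s x y hx nyx; apply/negP => hy; move: nyx; by rewrite (fc_uniq hy hx) eqxx.
have hx : 3 <= m%:R :> R by rewrite (ler_nat R 3 m).
have hx0 : 0 < m%:R :> R by lra.
have hxn : m%:R != 0 :> R by rewrite pnatr_eq0 -lt0n.
rewrite ltr_pdivlMr in hth; last by lra.
have ht5 : 0 < 1 - 5 * t by nra.
have htn : 1 - t != 0 by apply/eqP => h; lra.
have ea1 : (1 - t) / 2 * (2 * (1 - 2 * t) / (3 * (1 - t))) = (1 - 2 * t) / 3 by field.
have ea2 : (1 - t) / 2 * ((1 + t) / (3 * (1 - t))) = (1 + t) / 6 by field.
pose Dx := (m%:R - 3 - t * (5 * m%:R - 3)) / m%:R.
have hDx : 0 < Dx by apply: divr_gt0; lra.
have ev : (1 - t) / (2 * m)%:R = (1 - t) / m%:R / 2 by rewrite (GRing.natrM R 2 m); field.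
have k1 : (1 - 2 * t) / 3 - t - (1 - t) / m%:R = Dx / 3 by rewrite /Dx; field.
have k2 : (1 - 2 * t) / 3 - (1 - t) / m%:R / 2 - (1 + t) / 6 = Dx / 6 by rewrite /Dx; field.
have sq := fun S => sumQ t S (eqP hA') (eqP hB') h21 h32.
have tQ : Defs.total (Qmanip t : profile R m) = 1.
  rewrite /Defs.total; have := sq predT; rewrite /= => ->.
  rewrite (LPhat _ (eqP hA') nBA) ea1 ea2; lra.
have tP := @total_Phat R m t.
have pA : plu (Qmanip t) A0 = t + (1 - t) / m%:R.
  change (plu (Qmanip t) A0) with (\sum_(s | fc s A0) Qmanip t s).
  rewrite sq (fne _ _ _ fB) 1?eq_sym // (fne _ _ _ fC) 1?eq_sym // !addr0.
  rewrite -(_ : plu (Phat t) A0 = \sum_(s | fc s A0 && prefers s A0 B) Phat t s).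
    by rewrite (plu_Phat _ _ (eqP hA')) eqxx.
  apply: eq_bigl => s; case h: (fc s A0) => //=.
  by rewrite fc_prefers // eq_sym.
have pB : plu (Qmanip t) B = (1 - 2 * t) / 3.
  change (plu (Qmanip t) B) with (\sum_(s | fc s B) Qmanip t s).
  rewrite sq fB (fne _ _ _ fC) // ea1 addr0 big_pred0 ?add0r // => s.
  case h: (fc s B) => //=; apply/negP => h2; have := fc_prefers nBA h.
  by move/prefers_asym; rewrite h2.
have pd : forall d, d != A0 -> d != B ->
    plu (Qmanip t) d = (1 - t) / m%:R / 2 + (if d == C then (1 + t) / 6 else 0).
  move=> d ndA ndB.
  change (plu (Qmanip t) d) with (\sum_(s | fc s d) Qmanip t s).
  rewrite sq (fne _ _ _ fB) // addr0 ea2 -ev.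
  have -> : fc s32 d = (d == C).
    by case: (eqVneq d C) => [->//|ndC]; apply: fne fC ndC.
  congr (_ + _); rewrite -(LcPhat t (eqP hA') nBA ndA ndB); apply: eq_bigl => s; exact: andbC.
have first : trs_first tb (Qmanip t) = B.
  apply: first_eq => // d ndB.
  case: (eqVneq d A0) => [->|ndA]; first by rewrite pA pB; lra.
  rewrite pd // pB; case: ifP => _; lra.
have second : trs_second tb (Qmanip t) = C.
  apply: (second_eq htb first nCB) => d ndB ndC.
  case: (eqVneq d A0) => [->|ndA]; first by rewrite pA pd // eqxx; lra.
  rewrite !pd // eqxx (negbTE ndC); lra.
have pCB : \sum_(s | prefers s C B) Qmanip t s = (1 - t) / 3 + (1 + t) / 6.
  rewrite sq ea2.
  have -> : prefers s21 C B = false.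
    by apply/negP => /prefers_asym; rewrite (fc_prefers _ fB) // eq_sym.
  rewrite (fc_prefers nCB fC) addr0; congr (_ + _).
  rewrite (eq_bigl (fun s => last3 s B A0 C)); last by move=> s; rewrite /last3 andbC.
  rewrite sum_Phat /last3 !pref1 (eqP hA') (eqP hB') (eqP hC') /= add0r.
  rewrite (_ : #|_| = #|[pred s | last3 s B A0 C]|); last by apply: eq_card.
  by apply: cntR => //; apply: card_last3 => //; rewrite eq_sym.
have pBC : \sum_(s | prefers s B C) Qmanip t s = 1 - ((1 - t) / 3 + (1 + t) / 6).
  by rewrite -pCB -tQ /Defs.total (sum_part _ (x := B) (y := C)) 1?eq_sym // addrK.
have trsQ : trs tb (Qmanip t) = B.
  have nBC : B != C by rewrite eq_sym.
  have [h _] := trs_res first second nBC.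
  by apply: h; rewrite pCB pBC; lra.
have trsP : trs tb (Phat t) = A0 by apply: (part1 (eqP hA') hm t0 t1 htb).
split; last by rewrite trsQ /is_cand (eqP hB').
split.
  split; last by rewrite tQ.
  have a1p : 0 <= (1 - 2 * t) / 3 by lra.
  have a2p : 0 <= (1 + t) / 6 by lra.
  move=> s; rewrite /Qmanip ea1 ea2; apply: addr_ge0; [apply: addr_ge0|];
    case: ifP => _ //; exact: Phat_ge0 s (ltW t0) t1.
split; first by rewrite tQ tP.
split; first by rewrite trsQ trsP.
move=> s hs; rewrite trsQ trsP; apply/negPn/negP => hn; move: hs.
rewrite /Qmanip (E_eq _ (eqP hA') (eqP hB')) (negbTE hn) ea1 ea2 -addrA.
rewrite ltNge lerDl; apply/negP/negPn; apply: addr_ge0; case: ifP => _ //; lra.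
Qed.


Unset Implicit Arguments.

Theorem mainTheorem8 (R : realFieldType) (m : nat) (theta : R)
    (tb : {set 'I_m} -> 'I_m) :
  (3 <= m)%N -> 0 < theta -> theta <= 1 -> tiebreak tb ->
  is_cand 1 (trs tb (Phat theta))
  /\ (((m%:R - 3) / (5 * m%:R - 3) < theta) ->
        ~ is_CM (trs tb) (Phat theta) /\
        exists eps : R, 0 < eps /\
          forall P : profile R m, valid_profile P ->
            (forall s, `|P s - Phat theta s| < eps) ->
            ~ is_CM (trs tb) P)
  /\ ((theta < (m%:R - 3) / (5 * m%:R - 3)) ->
        is_CM (trs tb) (Phat theta) /\
        CM_witness (trs tb) (Phat theta) (Qmanip theta) /\
        is_cand 2 (trs tb (Qmanip theta))).
Proof.
move=> hm t0 t1 htb.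
have hm0 : (0 < m)%N by apply: leq_trans hm.
pose A0 : 'I_m := Ordinal hm0.
have hA : val A0 = 0%N by [].
have hval : valid_profile (Phat theta : profile R m).
  split; first by move=> s; apply: Phat_ge0 => //; apply: ltW.
  by rewrite total_Phat ltr01.
split; first by rewrite (part1 hA hm t0 t1 htb) /is_cand.
split.
  move=> hth; have [eps [ep H]] := part2 hA hm t0 t1 htb hth.
  split; last by exists eps.
  by apply: H => // s; rewrite subrr normr0.
move=> hth; have [W c2] := part3 hA hm t0 t1 htb hth.
by split; [exists (Qmanip theta) | split].
Qed.
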